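(* Let $(D, c, \mathcal{B})$ be an instance of 2-Layer General Transshipment with parts $U, W$ (so $A(D) \subseteq U \times W$) and integral capacities $c: A(D) \to \mathbb{N}$. Suppose that for each $v \in V(D)$, either $B_v \subseteq \mathbb{Z}$ or $B_v = [c_v, d_v]$ for some integers $c_v \le d_v$. If $(D, c, \mathcal{B})$ has a $\mathcal{B}$-transshipment, then it has a maximum-value $\mathcal{B}$-transshipment that is integral, i.e., assigns an integer value to every arc.
   Context: A digraph $D$ is 2-layered with parts $U,W$ if $V(D)$ is the disjoint union of $U$ and $W$ and $A(D) \subseteq U \times W$. An instance of 2-Layer General Transshipment consists of a 2-layered digraph $D$ with parts $U,W$, capacities $c: A(D) \to \mathbb{Q}_{\ge 0}$, and sets $\mathcal{B} = \{B_v : v \in V(D)\}$ with $B_v \subseteq \mathbb{Q}_{\ge 0}$ for $v \in U$ and $B_v \subseteq \mathbb{Q}_{\le 0}$ for $v \in W$. For $f: A(D) \to \mathbb{Q}_{\ge 0}$ the excess at $v$ is $f_\Sigma(v) = \sum_{(v,x)\in A(D)} f(v,x) - \sum_{(x,v)\in A(D)} f(x,v)$. A $\mathcal{B}$-transshipment is an $f: A(D) \to \mathbb{Q}_{\ge 0}$ with $f(a) \le c(a)$ for every arc $a$ and $f_\Sigma(v) \in B_v$ for all $v$; its value is $\mathrm{val}(f) = \sum_{u \in U} f_\Sigma(u)$. *)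

(* Defs.v *)
From mathcomp Require Import all_boot all_order all_algebra.
Set Implicit Arguments. Unset Strict Implicit. Unset Printing Implicit Defensive.
Import Order.TTheory GRing.Theory Num.Theory.
Local Open Scope ring_scope.

(* A 2-layered digraph with parts U, W : arc set A ⊆ U × W.
   Flows f : U * W -> rat; only values on arcs of A are meaningful. *)

Definition is_int (x : rat) : Prop := exists z : int, x = z%:~R.

Definition excessU (U W : finType) (A : {set U * W}) (f : U * W -> rat) (u : U) : rat :=
  \sum_(w : W | (u, w) \in A) f (u, w).

Definition excessW (U W : finType) (A : {set U * W}) (f : U * W -> rat) (w : W) : rat :=
  - \sum_(u : U | (u, w) \in A) f (u, w).

Definition is_transshipment (U W : finType) (A : {set U * W}) (c : U * W -> nat)
    (BU : U -> rat -> Prop) (BW : W -> rat -> Prop) (f : U * W -> rat) : Prop :=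
  (forall a, a \in A -> 0 <= f a /\ f a <= (c a)%:R) /\
  (forall u, BU u (excessU A f u)) /\
  (forall w, BW w (excessW A f w)).

Definition tvalue (U W : finType) (A : {set U * W}) (f : U * W -> rat) : rat :=
  \sum_(u : U) excessU A f u.

Definition int_or_int_interval (B : rat -> Prop) : Prop :=
  (forall x, B x -> is_int x) \/
  (exists cv dv : int, cv <= dv /\ forall x, B x <-> (cv%:~R <= x /\ x <= dv%:~R)).

(* Main.v *)
Require Import Defs.
From mathcomp Require Import all_boot all_order all_algebra.
Import Order.TTheory GRing.Theory Num.Theory.
Local Open Scope ring_scope.
From mathcomp Require Import lra zify.
From Stdlib Require Import Classical.
Set Implicit Arguments. Unset Strict Implicit. Unset Printing Implicit Defensive.
Import Order.TTheory GRing.Theory Num.Theory.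
Local Open Scope ring_scope.


Lemma step_exists (O : finType) (x e : O -> rat) :
  (exists o, e o != 0) -> (forall o, e o != 0 -> x o \isn't a Num.int) ->
  exists t : rat, 0 < t /\
   (forall o, (Num.floor (x o))%:~R <= x o + t * e o <= (Num.ceil (x o))%:~R) /\
   exists o, e o != 0 /\ x o + t * e o \is a Num.int.
Proof.
move=> [o0 eo0] hx.
pose r o := (if 0 < e o then (Num.ceil (x o))%:~R - x o
             else (Num.floor (x o))%:~R - x o) / e o.
have rpos : forall o, e o != 0 -> 0 < r o.
  move=> o eo; have xo := hx o eo.
  have h1 : (Num.floor (x o))%:~R < x o.
    rewrite lt_neqAle floor_le andbT; apply: contraNN xo => /eqP <-.
    by rewrite rpred_int.
  have h2 : x o < (Num.ceil (x o))%:~R.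
    rewrite lt_neqAle ceil_ge andbT; apply: contraNN xo => /eqP ->.
    by rewrite rpred_int.
  rewrite /r; case: ifP => he.
    by apply: divr_gt0; lra.
  have he' : e o < 0 by rewrite lt_neqAle eo /= leNgt he.
  by rewrite ltr_ndivlMr // mul0r; lra.
case: (@arg_minP _ rat _ o0 (fun o => e o != 0) r eo0) => os eos hmin.
exists (r os); split; first exact: rpos.
split.
  move=> o; have fl := floor_le (x o); have cg := ceil_ge (x o).
  case: (eqVneq (e o) 0) => [->|eo]; first by rewrite mulr0 addr0 fl cg.
  have := hmin o eo; have := rpos os eos.
  set t := r os; rewrite /r; case: ifP => he p1 p2.
    rewrite ler_pdivlMr // in p2.
    have : 0 <= t * e o by rewrite mulr_ge0 // ltW.
    move=> q; apply/andP; split; lra.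
  have he' : e o < 0 by rewrite lt_neqAle eo /= leNgt he.
  rewrite ler_ndivlMr // in p2.
  have : t * e o <= 0 by rewrite mulr_ge0_le0 // ltW.
  move=> q; apply/andP; split; lra.
exists os; split => //.
rewrite /r divfK //; case: ifP => _.
  by rewrite addrC subrK rpred_int.
by rewrite addrC subrK rpred_int.
Qed.


Lemma kernel_exists (I J : finType) (P : pred I) (Q : pred J) (M : I -> J -> rat) :
  (#|Q| < #|P|)%N ->
  exists d : I -> rat, (forall i, ~~ P i -> d i = 0) /\ (exists i, d i != 0) /\
    forall j, Q j -> \sum_i d i * M i j = 0.
Proof.
move=> hlt.
pose Mat : 'M[rat]_(#|P|, #|Q|) := \matrix_(k, l) M (enum_val k) (enum_val l).
pose K := kermx Mat.
have rK : (0 < \rank K)%N.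
  rewrite /K mxrank_ker subn_gt0.
  exact: leq_ltn_trans (rank_leq_col Mat) hlt.
have [k0 [k1 hk]] : exists k0 k1, K k0 k1 != 0.
  case: (pickP (fun p : 'I_#|P| * 'I_#|P| => K p.1 p.2 != 0)) => [[a b] /= h|hn].
    by exists a, b.
  have K0 : K = 0.
    apply/matrixP => i j.
    by apply/eqP; move: (hn (i, j)) => /= /negbT; rewrite negbK => /eqP ->; rewrite mxE.
  by move: rK; rewrite K0 mxrank0.
pose v := row k0 K.
have hv : v *m Mat = 0 by rewrite /v -row_mul mulmx_ker row0.
exists (fun i => \sum_(k | enum_val k == i) v 0 k).
split.
  move=> i Pi; apply: big_pred0 => k; apply/negbTE; apply: contraNN Pi => /eqP <-.
  exact: (enum_valP k).
split.
  exists (enum_val k1).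
  rewrite (big_pred1 k1); first by rewrite mxE.
  by move=> k /=; apply/eqP/eqP => [/enum_val_inj|->].
move=> j Qj.
have Qj' : j \in Q by [].
rewrite -(enum_rankK_in Qj' Qj').
set l := enum_rank_in _ _.
have := congr1 (fun A : 'M[rat]_(1, #|Q|) => A 0 (l : 'I_#|Q|)) hv; rewrite !mxE => h; apply: etrans h.
under eq_bigr do rewrite mulr_suml.
rewrite (exchange_big_dep xpredT) //=.
apply: eq_bigr => k _.
rewrite (big_pred1 (enum_val k)) ?mxE //.

Qed.


Definition xval (U W : finType) (A : {set U * W}) (g : U * W -> rat)
  (o : (U * W) + (U + W)) : rat :=
  match o with
  | inl a => if a \in A then g a else 0
  | inr (inl u) => excessU A g u
  | inr (inr w) => excessW A g w
  end.

Lemma excessU_lin (U W : finType) (A : {set U * W}) g d t u :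
  excessU A (fun a => g a + t * d a) u = excessU A g u + t * excessU A d u.
Proof. by rewrite /excessU big_split /= mulr_sumr. Qed.

Lemma excessW_lin (U W : finType) (A : {set U * W}) g d t w :
  excessW A (fun a => g a + t * d a) w = excessW A g w + t * excessW A d w.
Proof. by rewrite /excessW big_split /= opprD mulrN mulr_sumr. Qed.

Lemma excessU_scale (U W : finType) (A : {set U * W}) d s u :
  excessU A (fun a => s * d a) u = s * excessU A d u.
Proof. by rewrite /excessU mulr_sumr. Qed.

Lemma excessW_scale (U W : finType) (A : {set U * W}) d s w :
  excessW A (fun a => s * d a) w = s * excessW A d w.
Proof. by rewrite /excessW mulrN mulr_sumr. Qed.

Lemma tvalue_lin (U W : finType) (A : {set U * W}) g d t :
  tvalue A (fun a => g a + t * d a) = tvalue A g + t * tvalue A d.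
Proof.
rewrite /tvalue mulr_sumr -big_split /=; apply: eq_bigr => u _.
exact: excessU_lin.
Qed.

Lemma tvalue_scale (U W : finType) (A : {set U * W}) d s :
  tvalue A (fun a => s * d a) = s * tvalue A d.
Proof.
rewrite /tvalue mulr_sumr; apply: eq_bigr => u _; exact: excessU_scale.
Qed.

Lemma xval_lin (U W : finType) (A : {set U * W}) g d t o :
  xval A (fun a => g a + t * d a) o = xval A g o + t * xval A d o.
Proof.
case: o => [a|[u|w]] /=.
- by case: (a \in A); rewrite ?mulr0 ?addr0.
- exact: excessU_lin.
- exact: excessW_lin.
Qed.

Lemma sum_excess (U W : finType) (A : {set U * W}) d :
  \sum_u excessU A d u = - \sum_w excessW A d w.
Proof.
rewrite /excessU /excessW sumrN opprK.
under eq_bigr do rewrite big_mkcond.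
rewrite exchange_big /=; apply: eq_bigr => w _.
by rewrite [RHS]big_mkcond.
Qed.

Lemma vert_ok (B : rat -> Prop) x y : int_or_int_interval B -> B x ->
  (Num.floor x)%:~R <= y <= (Num.ceil x)%:~R -> B y.
Proof.
case=> [hi|[cv [dv [_ hB]]]] Bx /andP[h1 h2].
- have xi : x \is a Num.int by case: (hi x Bx) => z ->; rewrite rpred_int.
  move: h2; rewrite ceil_floor xi addr0 => h2.
  have -> : y = x by rewrite -(floorK xi); apply/le_anti; rewrite h1 h2.
  exact: Bx.
- case/hB: Bx => c1 c2; apply/hB; split.
  + apply: le_trans h1; rewrite ler_int; by rewrite floor_ge_int.
  + apply: le_trans h2 _; rewrite ler_int; by rewrite ceil_le_int.
Qed.

Lemma arc_ok (x y : rat) (n : nat) : 0 <= x <= n%:R ->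
  (Num.floor x)%:~R <= y <= (Num.ceil x)%:~R -> 0 <= y <= n%:R.
Proof.
move=> /andP[h0 hn] /andP[h1 h2]; apply/andP; split.
- apply: le_trans h1; rewrite ler0z; by rewrite floor_ge0.
- apply: le_trans h2 _; have : Num.ceil x <= n%:Z by rewrite ceil_le_int.
  by rewrite -(ler_int rat) => /le_trans; apply.
Qed.


Lemma fixedU_two (U W : finType) (A : {set U * W}) g u w :
  excessU A g u \is a Num.int -> (u, w) \in A -> g (u, w) \isn't a Num.int ->
  exists w', [/\ w' != w, (u, w') \in A & g (u, w') \isn't a Num.int].
Proof.
move=> hu hA hg.
case: (pickP (fun w' => [&& w' != w, (u, w') \in A & g (u, w') \isn't a Num.int])) =>
  [w' /and3P[h1 h2 h3]|hn]; first by exists w'.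
move: hu; rewrite /excessU (bigD1 w) //=.
have hr : \sum_(w' | ((u, w') \in A) && (w' != w)) g (u, w') \is a Num.int.
  apply: rpred_sum => w' /andP[h1 h2]; move: (hn w'); rewrite h1 h2 /=.
  by move/negbT; rewrite negbK.
move=> hs; have := rpredB hs hr; rewrite addrK => hi.
by rewrite hi in hg.
Qed.

Lemma fixedW_two (U W : finType) (A : {set U * W}) g u w :
  excessW A g w \is a Num.int -> (u, w) \in A -> g (u, w) \isn't a Num.int ->
  exists u', [/\ u' != u, (u', w) \in A & g (u', w) \isn't a Num.int].
Proof.
move=> hw hA hg.
case: (pickP (fun u' => [&& u' != u, (u', w) \in A & g (u', w) \isn't a Num.int])) =>
  [u' /and3P[h1 h2 h3]|hn]; first by exists u'.
move: hw; rewrite /excessW (bigD1 u) //= rpredN.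
have hr : \sum_(u' | ((u', w) \in A) && (u' != u)) g (u', w) \is a Num.int.
  apply: rpred_sum => u' /andP[h1 h2]; move: (hn u'); rewrite h1 h2 /=.
  by move/negbT; rewrite negbK.
move=> hs; have := rpredB hs hr; rewrite addrK => hi.
by rewrite hi in hg.
Qed.

Lemma sum_degU (U W : finType) (F : {set U * W}) :
  (\sum_u #|[set w | (u, w) \in F]|)%N = #|F|.
Proof.
rewrite -sum1_card [RHS]big_mkcond /=.
rewrite (eq_bigr (fun p : U * W => if (p.1, p.2) \in F then 1%N else 0%N)); last by case=> ? ? _.
rewrite -(pair_bigA _ (fun u w => if (u, w) \in F then 1%N else 0%N)) /=.
apply: eq_bigr => u _; rewrite -sum1_card big_mkcond /=.
by apply: eq_bigr => w _; rewrite inE.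
Qed.

Lemma sum_degW (U W : finType) (F : {set U * W}) :
  (\sum_w #|[set u | (u, w) \in F]|)%N = #|F|.
Proof.
rewrite -sum1_card [RHS]big_mkcond /=.
rewrite (eq_bigr (fun p : U * W => if (p.1, p.2) \in F then 1%N else 0%N)); last by case.
rewrite -(pair_bigA _ (fun u w => if (u, w) \in F then 1%N else 0%N)) /=.
rewrite exchange_big /=.
apply: eq_bigr => w _; rewrite -sum1_card big_mkcond /=.
by apply: eq_bigr => u _; rewrite inE.
Qed.


Definition Mx (U W : finType) (i : U * W) (j : U + W) : rat :=
  match j with inl u => (i.1 == u)%:R | inr w => (i.2 == w)%:R end.

Lemma sumM_U (U W : finType) (A : {set U * W}) d u :
  (forall a, a \notin A -> d a = 0) -> \sum_i d i * Mx i (inl u) = excessU A d u.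
Proof.
move=> hd.
rewrite (eq_bigr (fun p => (fun x y => d (x, y) * (x == u)%:R) p.1 p.2)); last by case.
rewrite -(pair_bigA _ (fun x y => d (x, y) * (x == u)%:R)) /= (bigD1 u) //=.
rewrite [X in _ + X]big1 => [|x hx]; last by apply: big1 => y _; rewrite (negbTE hx) mulr0.
  rewrite addr0 /excessU [RHS]big_mkcond; apply: eq_bigr => w _; rewrite eqxx mulr1.
  by case: ifP => // /negbT; exact: hd.
Qed.

Lemma sumM_W (U W : finType) (A : {set U * W}) d w :
  (forall a, a \notin A -> d a = 0) -> \sum_i d i * Mx i (inr w) = - excessW A d w.
Proof.
move=> hd.
rewrite (eq_bigr (fun p => (fun x y => d (x, y) * (y == w)%:R) p.1 p.2)); last by case.
rewrite -(pair_bigA _ (fun x y => d (x, y) * (y == w)%:R)) /= exchange_big /= (bigD1 w) //=.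
rewrite [X in _ + X]big1 => [|x hx]; last by apply: big1 => y _; rewrite (negbTE hx) mulr0.
  rewrite addr0.
  rewrite /excessW opprK [RHS]big_mkcond; apply: eq_bigr => u _; rewrite eqxx mulr1.
  by case: ifP => // /negbT; exact: hd.
Qed.


Lemma direction (U W : finType) (A : {set U * W}) (g : U * W -> rat)
  (F : {set U * W}) (inF : forall a, (a \in F) = (a \in A) && (g a \isn't a Num.int)) :
  (exists a, a \in F) ->
  exists d : U * W -> rat, (forall a, a \notin F -> d a = 0) /\ (exists a, d a != 0) /\
    forall v, xval A g (inr v) \is a Num.int -> xval A d (inr v) = 0.
Proof.
move=> [[u0 w0] a0F].
pose deg (v : U + W) : nat := match v with
  | inl u => #|[set w | (u, w) \in F]| | inr w => #|[set u | (u, w) \in F]| end.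
pose fixed v := xval A g (inr v) \is a Num.int.
have hdeg2 : forall v, fixed v -> (0 < deg v)%N -> (2 <= deg v)%N.
  case=> [u|w] hf /card_gt0P [x]; rewrite inE inF => /andP[hA hg].
  - have [w' [hne hA' hg']] := fixedU_two hf hA hg.
    have -> : 2%N = #|[set x; w']| by rewrite cards2 eq_sym hne.
    apply: subset_leq_card; apply/subsetP => y; rewrite !inE.
    by case/orP => /eqP ->; rewrite inF ?hA ?hg ?hA' ?hg'.
  - have [u' [hne hA' hg']] := fixedW_two hf hA hg.
    have -> : 2%N = #|[set x; u']| by rewrite cards2 eq_sym hne.
    apply: subset_leq_card; apply/subsetP => y; rewrite !inE.
    by case/orP => /eqP ->; rewrite inF ?hA ?hg ?hA' ?hg'.
have sumdeg : (\sum_v deg v = #|F| + #|F|)%N.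
  by rewrite big_sumType /= sum_degU sum_degW.
have untouched : forall v d, deg v = 0%N -> (forall a, a \notin F -> d a = 0) ->
    xval A d (inr v) = 0.
  case=> [u|w] d h0 hd /=.
  - rewrite /excessU big1 // => w _; apply: hd; apply/negP => hF.
    have : (0 < deg (inl u))%N by apply/card_gt0P; exists w; rewrite inE.
    by rewrite h0.
  - rewrite /excessW big1 ?oppr0 // => u _; apply: hd; apply/negP => hF.
    have : (0 < deg (inr w))%N by apply/card_gt0P; exists u; rewrite inE.
    by rewrite h0.
have cardP : #|(fun a => a \in F) : pred (U * W)| = #|F| by apply: eq_card.
have d1z : forall d : U * W -> rat, (forall a, a \notin F -> d a = 0) -> forall a, a \notin A -> d a = 0.
  by move=> d hd a ha; apply: hd; rewrite inF (negbTE ha).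
case: (boolP [exists v, (0 < deg v)%N && ~~ fixed v]) => [/existsP [vf /andP[vft vff]] | hnf].
  pose Q : pred (U + W) := fun v => (0 < deg v)%N && fixed v.
  have hQ : (#|Q| < #|F|)%N.
    have h1 : (\sum_v ((if Q v then 2 else 0) + (if (0 < deg v)%N && ~~ fixed v then 1 else 0)) <= \sum_v deg v)%N.
      apply: leq_sum => v _; rewrite /Q.
      case: (boolP (0 < deg v)%N) => ht /=; last by [].
      case: (boolP (fixed v)) => hf /=; last by lia.
      by have := hdeg2 v hf ht; lia.
    rewrite big_split /= -!big_mkcond /= sum_nat_const sum1_card sumdeg in h1.
    have : (0 < #|(fun v => (0 < deg v)%N && ~~ fixed v) : pred (U + W)|)%N.
      by apply/card_gt0P; exists vf; rewrite unfold_in /= vft vff.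
    have e1 : #|Q| = #|(fun v => (0 < deg v)%N && fixed v) : pred (U + W)| by [].
    move=> hh; rewrite -e1 in h1; move: hh h1; set kk := #|_ : pred _|; move=> hh h1.
    lia.
  have hk : (#|Q| < #|(fun a => a \in F) : pred (U * W)|)%N by rewrite cardP.
have [d [hd1 [[a1 ha1] hd3]]] := @kernel_exists _ _ (fun a => a \in F) Q (@Mx U W) hk.
  exists d; split => //; split; first by exists a1.
  move=> v hf.
  case: (eqVneq (deg v) 0%N) => h0; first exact: untouched.
  have Qv : Q v by rewrite /Q; apply/andP; split; [rewrite lt0n | exact: hf].
  have := hd3 v Qv; case: v hf h0 Qv => [u|w] _ _ _ /=.
  - rewrite (@sumM_U _ _ A) // => a ha; exact: d1z hd1 a ha.
  - rewrite (@sumM_W _ _ A) => [|a ha]; last exact: d1z hd1 a ha.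
    by move/(congr1 -%R); rewrite opprK oppr0.
have hfix : forall v, (0 < deg v)%N -> fixed v.
  move=> v hv; apply: contraNT hnf => hf; apply/existsP; exists v; by rewrite hv.
pose Q1 : pred (U + W) := fun v => (0 < deg v)%N && fixed v.
pose Q := [predD1 Q1 & inl u0].
have t0 : (0 < deg (inl u0))%N by apply/card_gt0P; exists w0; rewrite inE.
have hQ : (#|Q| < #|F|)%N.
  have h1 : (\sum_v (if Q1 v then 2 else 0) <= \sum_v deg v)%N.
    apply: leq_sum => v _; rewrite /Q1.
    case: (boolP (0 < deg v)%N) => ht /=; last by [].
    case: (boolP (fixed v)) => hf /=; last by lia.
    by have := hdeg2 v hf ht; lia.
  rewrite -big_mkcond /= sum_nat_const sumdeg in h1.
  have := cardD1 (inl u0) Q1.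
  have -> : (inl u0 \in Q1) = true by rewrite unfold_in /Q1 /= t0 hfix.
  move: h1; set k1 := #|_ : pred _|; set k2 := #|_ : pred _|.
  move=> hh e; have -> : #|Q| = #|[predD1 Q1 & inl u0]| by [].
  move: e; set k3 := #|[predD1 _ & _]|. simpl nat_of_bool. lia.
have hk : (#|Q| < #|(fun a => a \in F) : pred (U * W)|)%N by rewrite cardP.
have [d [hd1 [[a1 ha1] hd3]]] := @kernel_exists _ _ (fun a => a \in F) Q (@Mx U W) hk.
exists d; split => //; split; first by exists a1.
have zero_other : forall v, v != inl u0 -> xval A d (inr v) = 0.
  move=> v hne; case: (eqVneq (deg v) 0%N) => h0; first exact: untouched.
  have Qv : Q v by rewrite inE hne /Q1 unfold_in /= lt0n h0 hfix // lt0n h0.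
  have := hd3 v Qv; case: v hne h0 Qv => [u|w] _ _ _ /=.
  - rewrite (@sumM_U _ _ A) // => a ha; exact: d1z hd1 a ha.
  - rewrite (@sumM_W _ _ A) => [|a ha]; last exact: d1z hd1 a ha.
    by move/(congr1 -%R); rewrite opprK oppr0.
move=> v hf; case: (eqVneq v (inl u0)) => [->|hne]; last exact: zero_other.
have := sum_excess A d.
rewrite (bigD1 u0) //= [X in _ + X]big1 => [|u hu]; last exact: (zero_other (inl u)).
rewrite big1 => [|w _]; last exact: (zero_other (inr w)).
by rewrite addr0 oppr0.
Qed.


Definition mu (U W : finType) (A : {set U * W}) (g : U * W -> rat) : nat :=
  #|[set o | xval A g o \isn't a Num.int]|.

Lemma step_main (U W : finType) (A : {set U * W}) (c : U * W -> nat)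
    (BU : U -> rat -> Prop) (BW : W -> rat -> Prop)
    (hintU : forall u, int_or_int_interval (BU u))
    (hintW : forall w, int_or_int_interval (BW w)) g :
  is_transshipment A c BU BW g -> (exists a, (a \in A) && (g a \isn't a Num.int)) ->
  exists g', [/\ is_transshipment A c BU BW g', (mu A g' < mu A g)%N &
     tvalue A g <= tvalue A g'].
Proof.
move=> [hc [hu hw]] [a0 ha0].
pose F := [set a in A | g a \isn't a Num.int].
have inF : forall a, (a \in F) = (a \in A) && (g a \isn't a Num.int) by move=> a; rewrite inE.
have a0F : a0 \in F by rewrite inF.
have [d [hd1 [[a1 ha1] hd3]]] := direction inF (ex_intro _ a0 a0F).
pose s : rat := if 0 <= tvalue A d then 1 else -1.
have s0 : s != 0 by rewrite /s; case: ifP.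
pose d' := fun a => s * d a.
have hts : 0 <= tvalue A d'.
  rewrite tvalue_scale /s; case: ifP => h; first by rewrite mul1r.
  by rewrite mulN1r oppr_ge0 ltW // ltNge h.
have a1F : a1 \in F by apply: contraNT ha1 => /hd1 ->.
have ex' : xval A d' (inl a1) != 0.
  by rewrite /= (_ : a1 \in A) ?mulf_neq0 //; move: a1F; rewrite inF => /andP[].
have hx : forall o, xval A d' o != 0 -> xval A g o \isn't a Num.int.
  case=> [a|[u|w]] /=.
  - case: ifP => hA; last by rewrite eqxx.
    rewrite /d' mulf_eq0 negb_or => /andP[_ hda].
    have : a \in F by apply: contraNT hda => /hd1 ->.
    by rewrite inF => /andP[].
  - rewrite excessU_scale mulf_eq0 negb_or => /andP[_ h].
    by apply: contra h => /(hd3 (inl u)) /= ->.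
  - rewrite excessW_scale mulf_eq0 negb_or => /andP[_ h].
    by apply: contra h => /(hd3 (inr w)) /= ->.
have [t [t0 [hb [os [eos hos]]]]] := @step_exists _ (xval A g) (xval A d') (ex_intro _ (inl a1) ex') hx.
pose g' := fun a => g a + t * d' a.
have xg' : forall o, xval A g' o = xval A g o + t * xval A d' o by move=> o; exact: xval_lin.
exists g'; split.
- split; [|split].
  + move=> a hA; have := hb (inl a); rewrite /= hA => hb'.
    case: (hc a hA) => c1 c2.
    have /andP[h1 h2] := arc_ok (introT andP (conj c1 c2)) hb'.
    by split.
  + move=> u; have := hb (inr (inl u)); rewrite /= => hb'.
    have := xg' (inr (inl u)); rewrite /= => ->.
    exact: vert_ok (hintU u) (hu u) hb'.
  + move=> w; have := hb (inr (inr w)); rewrite /= => hb'.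
    have := xg' (inr (inr w)); rewrite /= => ->.
    exact: vert_ok (hintW w) (hw w) hb'.
- rewrite /mu; apply: proper_card; rewrite properE; apply/andP; split.
    apply/subsetP => o; rewrite !inE xg'.
    case: (eqVneq (xval A d' o) 0) => [->|/hx //]; by rewrite mulr0 addr0.
  apply/subsetPn; exists os; rewrite !inE ?xg' ?hos //.
  exact: hx.
- by rewrite tvalue_lin lerDl mulr_ge0 // ltW.
Qed.


Lemma round (U W : finType) (A : {set U * W}) (c : U * W -> nat)
    (BU : U -> rat -> Prop) (BW : W -> rat -> Prop)
    (hintU : forall u, int_or_int_interval (BU u))
    (hintW : forall w, int_or_int_interval (BW w)) g :
  is_transshipment A c BU BW g ->
  exists h, [/\ is_transshipment A c BU BW h, (forall a, a \in A -> h a \is a Num.int) &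
     tvalue A g <= tvalue A h].
Proof.
suff : forall n g, (mu A g <= n)%N -> is_transshipment A c BU BW g ->
  exists h, [/\ is_transshipment A c BU BW h, (forall a, a \in A -> h a \is a Num.int) &
     tvalue A g <= tvalue A h].
  by move=> H; apply: H (leqnn _).
elim=> [|n IH] {}g hmu hg.
  case: (pickP (fun a => (a \in A) && (g a \isn't a Num.int))) => [a ha|hn].
    have [g' [_ hlt _]] := step_main hintU hintW hg (ex_intro _ a ha).
    by move: hmu; rewrite leqn0 => /eqP h0; rewrite h0 in hlt.
  exists g; split => // a hA; move: (hn a); rewrite hA /= => /negbT; by rewrite negbK.
case: (pickP (fun a => (a \in A) && (g a \isn't a Num.int))) => [a ha|hn].
  have [g' [hg' hlt hv]] := step_main hintU hintW hg (ex_intro _ a ha).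
  have hle : (mu A g' <= n)%N by move: hlt hmu; lia.
  have [h [h1 h2 h3]] := IH g' hle hg'.
  by exists h; split => //; apply: le_trans hv h3.
exists g; split => // a hA; move: (hn a); rewrite hA /= => /negbT; by rewrite negbK.
Qed.

Lemma max_nat (P : nat -> Prop) N : P 0%N -> (forall n, P n -> (n <= N)%N) ->
  exists n, P n /\ forall m, P m -> (m <= n)%N.
Proof.
elim: N => [|N IH] p0 hb.
  by exists 0%N; split => // m /hb.
case: (classic (P N.+1)) => hN; first by exists N.+1.
apply: IH => // m pm; have := hb m pm; rewrite leq_eqVlt => /orP[/eqP e|//].
by rewrite e in pm.
Qed.


Unset Implicit Arguments.

Theorem lemma7 (U W : finType) (A : {set U * W}) (c : U * W -> nat)
    (BU : U -> rat -> Prop) (BW : W -> rat -> Prop)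
    (hBU : forall u x, BU u x -> 0 <= x)
    (hBW : forall w x, BW w x -> x <= 0)
    (hintU : forall u, int_or_int_interval (BU u))
    (hintW : forall w, int_or_int_interval (BW w))
    (hex : exists f, is_transshipment A c BU BW f) :
  exists f, is_transshipment A c BU BW f /\
    (forall a, a \in A -> is_int (f a)) /\
    (forall g, is_transshipment A c BU BW g -> tvalue A g <= tvalue A f).
Proof.
pose P (n : nat) := exists h, [/\ is_transshipment A c BU BW h,
   (forall a, a \in A -> h a \is a Num.int) & n%:R <= tvalue A h].
pose Cn := (\sum_u \sum_(w | (u, w) \in A) c (u, w))%N.
have tv_int : forall h, (forall a, a \in A -> h a \is a Num.int) -> tvalue A h \is a Num.int.
  move=> h hi; apply: rpred_sum => u _; apply: rpred_sum => w hw; exact: hi.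
have tv_ge0 : forall h, is_transshipment A c BU BW h -> 0 <= tvalue A h.
  move=> h [_ [hu _]]; apply: sumr_ge0 => u _; exact: hBU (hu u).
have hb : forall n, P n -> (n <= Cn)%N.
  move=> n [h [[hc _] _ hn]].
  have : tvalue A h <= Cn%:R.
    rewrite /Cn natr_sum; apply: ler_sum => u _; rewrite natr_sum.
    by apply: ler_sum => w hw; case: (hc _ hw).
  by move=> /(le_trans hn); rewrite ler_nat.
have [g0 hg0] := hex.
have [h0 [h01 h02 _]] := round hintU hintW hg0.
have p0 : P 0%N by exists h0; split => //; rewrite tv_ge0.
have [nm [[h [h1 h2 h3]] hmax]] := max_nat p0 hb.
exists h; split => //; split.
  by move=> a hA; apply/intrP; exact: h2.
move=> g hg.
have [h' [h'1 h'2 h'3]] := round hintU hintW hg.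
have : tvalue A h' \is a Num.nat by rewrite -intrEge0 ?tv_ge0 ?tv_int.
move=> /natrP [m hm].
have pm : P m by exists h'; split => //; rewrite hm.
apply: le_trans h'3 _; rewrite hm; apply: le_trans h3.
by rewrite ler_nat; apply: hmax.
Qed.
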